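(* Fix $a>0$. For $\beta>0$ let $f_\beta(x):=\frac14\big(a-e^{x/\beta}\big)$ and define $$\mathfrak{s}_\beta(x):=\int_{-1}^x\exp\Big(-2\int_0^u f_\beta(v)\,\mathrm{d}v\Big)\mathrm{d}u,\qquad \mathfrak{s}(x):=\int_{-1}^x\exp\Big(-2\int_0^u\frac a4\,\mathrm{d}v\Big)\mathrm{d}u.$$ Then for any $x_0<0$, $\mathfrak{s}_\beta'\to\mathfrak{s}'$ and $\mathfrak{s}_\beta\to\mathfrak{s}$ uniformly on $[x_0,0]$ as $\beta\to0$. Furthermore, $\mathfrak{s}_\beta(\beta^{1/6})\to\infty$ as $\beta\to 0$. *)

(* Defs.v *)
From Stdlib Require Import Reals.
From Coquelicot Require Import Coquelicot.
Open Scope R_scope.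

Definition f_beta (a beta x : R) : R := / 4 * (a - exp (x / beta)).

Definition s_beta (a beta x : R) : R :=
  RInt (fun u => exp (-2 * RInt (fun v => f_beta a beta v) 0 u)) (-1) x.

Definition s_lim (a x : R) : R :=
  RInt (fun u => exp (-2 * RInt (fun v => a / 4) 0 u)) (-1) x.

(* Main.v *)
Require Import Defs.
From Stdlib Require Import Reals Lra.
From Coquelicot Require Import Coquelicot.
Open Scope R_scope.

Lemma exp_le_exp x y : x <= y -> exp x <= exp y.
Proof. intros [h|h]. left; now apply exp_increasing. right; now subst. Qed.

Definition G (a b u : R) := exp (-(a*u/2) + b/2*(exp (u/b) - 1)).
Definition G0 (a u : R) := exp (-(a*u/2)).

Lemma G_cont a b x : 0 < b -> continuous (G a b) x.
Proof. intros hb. apply (@ex_derive_continuous R_AbsRing R_NormedModule). unfold G. auto_derive. lra. Qed.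

Lemma G0_cont a x : continuous (G0 a) x.
Proof. apply (@ex_derive_continuous R_AbsRing R_NormedModule). unfold G0. auto_derive. auto. Qed.

Lemma G_ex a b c d : 0 < b -> ex_RInt (G a b) c d.
Proof. intros hb. apply (@ex_RInt_continuous R_CompleteNormedModule). intros; now apply G_cont. Qed.

Lemma G0_ex a c d : ex_RInt (G0 a) c d.
Proof. apply (@ex_RInt_continuous R_CompleteNormedModule). intros; now apply G0_cont. Qed.

Lemma inner_beta a b u : 0 < b ->
  RInt (fun v => f_beta a b v) 0 u = /4*(a*u - b*exp(u/b) + b).
Proof.
  intros hb. apply is_RInt_unique.
  assert (H := is_RInt_derive (fun v => /4*(a*v - b*exp(v/b))) (f_beta a b) 0 u).
  replace (/4*(a*u - b*exp(u/b) + b)) with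
     (minus ((fun v => /4*(a*v - b*exp(v/b))) u) ((fun v => /4*(a*v - b*exp(v/b))) 0)).
  - apply H.
    + intros x _. unfold f_beta. auto_derive. lra. unfold Rdiv. field. lra.
    + intros x _. apply (@ex_derive_continuous R_AbsRing R_NormedModule). unfold f_beta. auto_derive. lra.
  - unfold minus, plus, opp; simpl. replace (0/b) with 0 by (field; lra).
    rewrite exp_0. ring.
Qed.

Lemma sb_eq a b x : 0 < b -> s_beta a b x = RInt (G a b) (-1) x.
Proof.
  intros hb. unfold s_beta. apply RInt_ext. intros u _.
  rewrite inner_beta by lra. unfold G. f_equal. field_simplify; try lra; auto.
Qed.

Lemma sl_eq a x : s_lim a x = RInt (G0 a) (-1) x.
Proof.
  unfold s_lim. apply RInt_ext. intros u _.
  rewrite RInt_const. unfold G0, scal; simpl; unfold mult; simpl. f_equal. field.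
Qed.

Lemma Dsb a b x : 0 < b -> Derive (s_beta a b) x = G a b x.
Proof.
  intros hb. apply is_derive_unique. apply is_derive_RInt with (a := -1).
  - apply filter_forall. intros y. rewrite sb_eq by auto. apply (@RInt_correct R_CompleteNormedModule).
    now apply G_ex.
  - now apply G_cont.
Qed.

Lemma Dsl a x : Derive (s_lim a) x = G0 a x.
Proof.
  apply is_derive_unique. apply is_derive_RInt with (a := -1).
  - apply filter_forall. intros y. rewrite sl_eq. apply (@RInt_correct R_CompleteNormedModule).
    apply G0_ex.
  - apply G0_cont.
Qed.

Lemma ptbound a b L u : 0 < a -> 0 < b -> L <= u <= 0 ->
  Rabs (G a b u - G0 a u) <= exp (-(a*L/2)) * (b/2).
Proof.
  intros ha hb hu. unfold G, G0. rewrite exp_plus.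
  set (t := b/2*(exp (u/b) - 1)).
  assert (e1 : exp (u/b) <= 1).
  { rewrite <- exp_0. apply exp_le_exp.
    apply Rmult_le_reg_r with b; auto. unfold Rdiv. rewrite Rmult_assoc, Rinv_l; lra. }
  assert (e2 := exp_pos (u/b)).
  assert (ht : -(b/2) <= t <= 0) by (unfold t; split; nra).
  assert (et1 : exp t <= 1) by (rewrite <- exp_0; apply exp_le_exp; lra).
  assert (et2 := exp_ineq1_le t).
  assert (g1 : exp (-(a*u/2)) <= exp (-(a*L/2))) by (apply exp_le_exp; nra).
  assert (g2 := exp_pos (-(a*u/2))).
  rewrite Rabs_left1 by nra. nra.
Qed.

Lemma part3 a (ha : 0 < a) (M : R) : exists delta : R, 0 < delta /\
     forall beta : R, 0 < beta < delta ->
       M < s_beta a beta (Rpower beta (1 / 6)).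
Proof.
  set (eta := /(64*(Rabs M + a + 1))).
  assert (Mabs := Rle_abs M).
  assert (Mabs0 := Rabs_pos M).
  assert (heta : 0 < eta) by (unfold eta; apply Rinv_0_lt_compat; lra).
  exists (eta^6). split. { apply pow_lt; auto. }
  intros b hb.
  set (y := Rpower b (1/6)).
  assert (hy : 0 < y) by (unfold y, Rpower; apply exp_pos).
  assert (hby : b = y^6).
  { rewrite <- Rpower_pow by auto. unfold y. rewrite Rpower_mult.
    replace (1/6 * INR 6) with 1 by (simpl; field). rewrite Rpower_1; lra. }
  assert (hye : y < eta).
  { unfold y. replace eta with (Rpower (eta^6) (1/6)).
    - apply Rlt_Rpower_l; lra.
    - rewrite <- Rpower_pow by auto. rewrite Rpower_mult.
      replace (INR 6 * (1/6)) with 1 by (simpl; field). rewrite Rpower_1; lra. }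
  assert (hy1 : y < 1).
  { apply Rlt_trans with eta; auto. unfold eta. rewrite <- Rinv_1.
    apply Rinv_lt_contravar; lra. }
  rewrite sb_eq by lra. fold y.
  rewrite <- (RInt_Chasles _ (-1) 0 y) by (apply G_ex; lra).
  rewrite <- (RInt_Chasles _ 0 (y/2) y) by (apply G_ex; lra).
  assert (I1 : 0 <= RInt (G a b) (-1) 0).
  { apply RInt_ge_0. lra. apply G_ex; lra. intros; unfold G; left; apply exp_pos. }
  assert (I2 : 0 <= RInt (G a b) 0 (y/2)).
  { apply RInt_ge_0. lra. apply G_ex; lra. intros; unfold G; left; apply exp_pos. }
  set (s := (y/2)/b).
  set (E := -(a*y/2) + b/2*(exp s - 1)).
  assert (I3 : (y - y/2) * exp E <= RInt (G a b) (y/2) y).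
  { rewrite <- (RInt_const (y/2) y (exp E)) at 1.
    apply RInt_le. lra. apply ex_RInt_const. apply G_ex; lra.
    intros u hu. unfold G. apply exp_le_exp. unfold E.
    assert (exp s <= exp (u/b)).
    { apply exp_le_exp. unfold s. unfold Rdiv. apply Rmult_le_compat_r.
      left; apply Rinv_0_lt_compat; lra. lra. }
    nra. }
  assert (hs : s = /(2*y^5)).
  { unfold s. rewrite hby. field. lra. }
  assert (hs0 : 0 < s) by (rewrite hs; apply Rinv_0_lt_compat; apply Rmult_lt_0_compat; [lra| apply pow_lt; lra]).
  assert (es : s^2/4 <= exp s).
  { replace s with (s/2 + s/2) at 2 by field. rewrite exp_plus.
    assert (H := exp_ineq1_le (s/2)). nra. }
  assert (key : (y/2)*(b/2)*(s^2/4) = /(64*y^3)).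
  { rewrite hs, hby. field. lra. }
  assert (k2 : /(64*y) <= /(64*y^3)).
  { apply Rinv_le_contravar. apply Rmult_lt_0_compat; [lra| apply pow_lt; lra].
    assert (y^2 <= 1) by nra. nra. }
  assert (k3 : Rabs M + a + 1 < /(64*y)).
  { replace (Rabs M + a + 1) with (/(64*eta)).
    - apply Rinv_lt_contravar. nra. lra.
    - unfold eta. field. lra. }
  assert (eE := exp_ineq1_le E).
  assert (yE : (y/2)*(1+E) <= (y - y/2) * exp E).
  { replace (y - y/2) with (y/2) by field. apply Rmult_le_compat_l; lra. }
  assert (b1 : b <= 1).
  { rewrite hby. replace 1 with (1^6) by ring. apply pow_incr; lra. }
  assert (P1 : (y/2)*(b/2)*(s^2/4) <= (y/2)*(b/2)*exp s).
  { apply Rmult_le_compat_l; [nra|lra]. }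
  assert (hexp : (y/2)*(1+E) = y/2 - (y/2)*(a*y/2) - (y/2)*(b/2) + (y/2)*(b/2)*exp s).
  { unfold E. ring. }
  assert (y*y <= 1) by nra. assert ((y/2)*(a*y/2) <= a/4) by nra.
  assert ((y/2)*(b/2) <= 1/4) by nra.
  unfold plus; simpl. lra.
Qed.

Theorem lemma5p2 (a : R) (ha : 0 < a) :
  (forall x0 : R, x0 < 0 ->
     (forall eps : R, 0 < eps -> exists delta : R, 0 < delta /\
        forall beta : R, 0 < beta < delta ->
        forall x : R, x0 <= x <= 0 ->
          Rabs (Derive (s_beta a beta) x - Derive (s_lim a) x) < eps) /\
     (forall eps : R, 0 < eps -> exists delta : R, 0 < delta /\
        forall beta : R, 0 < beta < delta ->
        forall x : R, x0 <= x <= 0 ->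
          Rabs (s_beta a beta x - s_lim a x) < eps)) /\
  (forall M : R, exists delta : R, 0 < delta /\
     forall beta : R, 0 < beta < delta ->
       M < s_beta a beta (Rpower beta (1 / 6))).
Proof.
  split; [| apply part3; auto].
  intros x0 hx0. split.
  - intros eps heps. set (K := exp (-(a*x0/2))).
    assert (hK : 0 < K) by apply exp_pos.
    exists (eps / K). split. { apply Rdiv_lt_0_compat; auto. }
    intros b hb x hx. rewrite Dsb, Dsl by lra.
    apply Rle_lt_trans with (K*(b/2)). { apply ptbound; auto; lra. }
    assert (K * b < eps).
    { destruct hb as [_ hb]. apply Rmult_lt_compat_l with (r := K) in hb; auto.
      unfold Rdiv in hb. rewrite <- Rmult_assoc, (Rmult_comm K eps), Rmult_assoc, Rinv_r in hb; lra. }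
    nra.
  - intros eps heps. set (L := Rmin (-1) x0). set (K := exp (-(a*L/2))).
    assert (hL1 : L <= -1) by apply Rmin_l.
    assert (hL2 : L <= x0) by apply Rmin_r.
    assert (hK : 0 < K) by apply exp_pos.
    set (C := (1 - L) * K).
    assert (hC : 0 < C) by (unfold C; apply Rmult_lt_0_compat; lra).
    exists (eps / C). split. { apply Rdiv_lt_0_compat; auto. }
    intros b hb x hx. rewrite sb_eq by lra. rewrite sl_eq.
    assert (hCb : C * b < eps).
    { destruct hb as [_ hb]. apply Rmult_lt_compat_l with (r := C) in hb; auto.
      unfold Rdiv in hb. rewrite <- Rmult_assoc, (Rmult_comm C eps), Rmult_assoc, Rinv_r in hb; lra. }
    assert (eqm : forall c d, RInt (G a b) c d - RInt (G0 a) c d =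
                   RInt (fun t => G a b t - G0 a t) c d).
    { intros c d. symmetry. apply (RInt_minus (G a b) (G0 a)). apply G_ex; lra. apply G0_ex. }
    assert (exd : forall c d, ex_RInt (fun t => G a b t - G0 a t) c d).
    { intros c d. apply (@ex_RInt_continuous R_CompleteNormedModule). intros z _.
      apply (continuous_minus (G a b) (G0 a)). apply G_cont; lra. apply G0_cont. }
    rewrite eqm.
    destruct (Rle_dec (-1) x) as [h1|h1].
    + apply Rle_lt_trans with ((x - -1) * (K*(b/2))).
      * apply abs_RInt_le_const; auto. intros t ht. apply ptbound; auto; lra.
      * unfold C in hCb. assert (0 < K*b) by nra. nra.
    + rewrite <- opp_RInt_swap by auto. unfold opp; simpl. rewrite Rabs_Ropp.
      apply Rle_lt_trans with ((-1 - x) * (K*(b/2))).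
      * apply abs_RInt_le_const; auto; try lra. intros t ht. apply ptbound; auto; lra.
      * unfold C in hCb. assert (0 < K*b) by nra. nra.
Qed.
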